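(* Let $\mathcal{D}$ be any definition. There is an assignment of a positive integer level $\mathrm{lvl}(p)$ to every predicate $p$ occurring in $\mathcal{D}$ such that, whenever $\forall\vec x.\,p\,\vec x\stackrel{\triangle}{=}B\,p\,\vec x$ is a clause in $\mathcal{D}$, we have $|p\,\vec x| > |B\,X^p\,\vec x|$ for every parameter $X^p\in\mathcal{P}_p$.
   Context: Formulae of ${\rm Linc}^-$ are simply typed $\lambda$-terms of type $o$ in $\beta\eta$-long normal form given by $F ::= X^p\,\vec t \mid s = t \mid p\,\vec t \mid \bot\mid\top\mid F\land F\mid F\lor F\mid F\supset F\mid \forall x.F\mid\exists x.F$, where $p$ ranges over predicate constants and, for each $p$, $X^p$ ranges over a countably infinite set $\mathcal{P}_p$ of parameters of the same type as $p$. A definition is a finite set of clauses $\forall\vec x.\,p\,\vec x\stackrel{\triangle}{=}B\,p\,\vec x$ (each either inductive or co-inductive), where $B$ is a closed term containing no parameters and no free occurrence of $p$ (so $B\,p\,\vec x$ is the body with $p$ substituted); each predicate is the head of at most one clause; and definitions are non-mutually recursive: for distinct clauses with heads $p\ne q$ and bodies $B$ (for $p$) and $C$ (for $q$), if $p$ occurs in $C$ then $q$ does not occur in $B$. Given a level assignment $\mathrm{lvl}$ on predicates, the size $|F|$ of a formula is: $|X^p\,\vec t|=1$; $|p\,\vec t|=\mathrm{lvl}(p)$; $|\bot|=|\top|=|s=t|=1$; $|B\land C|=|B\lor C|=|B\supset C|=|B|+|C|+1$; $|\forall x.B\,x|=|\exists x.B\,x|=|B\,x|+1$.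
   Formalization: Non-mutual recursion means that for distinct predicates p ≠ q, if p occurs in C directly or through a chain of clause bodies, then q does not occur in B directly or through such a chain. The statement above fails without it. *)

(* Defs.v *)
From Stdlib Require Import List Relations.
Import ListNotations.

Inductive ty : Type :=
| TBase : nat -> ty
| TArr  : ty -> ty -> ty.

(* Terms (de Bruijn variables, constants, application).  Sizes of formulae
   do not depend on terms. *)
Inductive tm : Type :=
| tvar : nat -> tm
| tcst : nat -> tm
| tapp : tm -> tm -> tm
| tlam : ty -> tm -> tm.

(* Predicate constants are named by nat; the parameter X^p_i is the i-th
   parameter of the countably infinite set P_p. *)
Definition pred_const := nat.

(* Formulae: quantifiers bind de Bruijn variable 0 of the given type. *)
Inductive formula : Type :=
| FParam : pred_const -> nat -> list tm -> formula
| FEq    : tm -> tm -> formula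
| FPred  : pred_const -> list tm -> formula
| FBot   : formula
| FTop   : formula
| FAnd   : formula -> formula -> formula
| FOr    : formula -> formula -> formula
| FImp   : formula -> formula -> formula
| FAll   : ty -> formula -> formula
| FEx    : ty -> formula -> formula.

Fixpoint pred_occurs (q : pred_const) (F : formula) : Prop :=
  match F with
  | FPred p _ => p = q
  | FParam _ _ _ | FEq _ _ | FBot | FTop => False
  | FAnd A B | FOr A B | FImp A B => pred_occurs q A \/ pred_occurs q B
  | FAll _ A | FEx _ A => pred_occurs q A
  end.

Fixpoint param_free (F : formula) : Prop :=
  match F with
  | FParam _ _ _ => False
  | FEq _ _ | FPred _ _ | FBot | FTop => True
  | FAnd A B | FOr A B | FImp A B => param_free A /\ param_free B
  | FAll _ A | FEx _ A => param_free A
  end.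

(* F[p := X^p_i] : replace every occurrence of the predicate p by the
   parameter X^p_i (parameters bind nothing, so no shifting is needed). *)
Fixpoint subst_pred (p : pred_const) (i : nat) (F : formula) : formula :=
  match F with
  | FPred q ts => if Nat.eqb q p then FParam p i ts else FPred q ts
  | FParam _ _ _ | FEq _ _ | FBot | FTop => F
  | FAnd A B => FAnd (subst_pred p i A) (subst_pred p i B)
  | FOr A B => FOr (subst_pred p i A) (subst_pred p i B)
  | FImp A B => FImp (subst_pred p i A) (subst_pred p i B)
  | FAll T A => FAll T (subst_pred p i A)
  | FEx T A => FEx T (subst_pred p i A)
  end.

(* A clause  forall x1..xn. p x1..xn =^triangle B p x1..xn.
   [cl_body] is the formula B p x (the body with p substituted), whose free
   de Bruijn variables 0..n-1 stand for x1..xn and where the recursive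
   occurrences of p appear as FPred p _. *)
Record clause : Type := Clause {
  cl_head : pred_const;
  cl_coinductive : bool;      (* false = inductive, true = co-inductive *)
  cl_args : list ty;
  cl_body : formula
}.

Definition definition := list clause.

Definition dep_step (D : definition) (q p : pred_const) : Prop :=
  exists c, In c D /\ cl_head c = q /\ pred_occurs p (cl_body c).

Definition depends (D : definition) : pred_const -> pred_const -> Prop :=
  clos_trans pred_const (dep_step D).

Definition well_formed_definition (D : definition) : Prop :=
  (forall c, In c D -> param_free (cl_body c)) /\
  NoDup (map cl_head D) /\
  (forall p q, p <> q -> depends D q p -> ~ depends D p q).

Definition occurs_in_definition (D : definition) (p : pred_const) : Prop :=
  exists c, In c D /\ (cl_head c = p \/ pred_occurs p (cl_body c)).

Fixpoint fsize (lvl : pred_const -> nat) (F : formula) : nat :=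
  match F with
  | FParam _ _ _ => 1
  | FPred p _ => lvl p
  | FEq _ _ | FBot | FTop => 1
  | FAnd A B | FOr A B | FImp A B => fsize lvl A + fsize lvl B + 1
  | FAll _ A | FEx _ A => fsize lvl A + 1
  end.

Definition head_size (lvl : pred_const -> nat) (p : pred_const) (xs : list tm) : nat :=
  fsize lvl (FPred p xs).

(* Main.v *)
Require Import Defs.
From Stdlib Require Import List.
From Stdlib Require Import Lia Arith Relations ClassicalDescription.
Import ListNotations.

Fixpoint fpreds (F : formula) : list nat :=
  match F with
  | FPred p _ => [p]
  | FParam _ _ _ | FEq _ _ | FBot | FTop => []
  | FAnd A B | FOr A B | FImp A B => fpreds A ++ fpreds B
  | FAll _ A | FEx _ A => fpreds A
  end.

Lemma fpreds_spec r F : pred_occurs r F -> In r (fpreds F).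
Proof.
  induction F; simpl; intros H; try tauto; try (subst; left; reflexivity);
  try (apply in_or_app; tauto).
Qed.

Definition nodes F := fsize (fun _ => 1) F.

Lemma subst_nodes p i F : nodes (subst_pred p i F) = nodes F.
Proof.
  unfold nodes; induction F; simpl; try lia.
  destruct (Nat.eqb p0 p); reflexivity.
Qed.

Lemma subst_occ p i r F : pred_occurs r (subst_pred p i F) -> r <> p /\ pred_occurs r F.
Proof.
  induction F; simpl; try tauto.
  destruct (Nat.eqb p0 p) eqn:E; simpl; try tauto.
  intros ->. apply Nat.eqb_neq in E. auto.
Qed.

Lemma size_bound lvl L F : 1 <= L -> (forall r, pred_occurs r F -> lvl r <= L) ->
  fsize lvl F <= nodes F * L.
Proof.
  unfold nodes; induction F; simpl; intros HL H; try nia.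
  - specialize (H p eq_refl). lia.
  - specialize (IHF1 HL (fun r h => H r (or_introl h))).
    specialize (IHF2 HL (fun r h => H r (or_intror h))). nia.
  - specialize (IHF1 HL (fun r h => H r (or_introl h))).
    specialize (IHF2 HL (fun r h => H r (or_intror h))). nia.
  - specialize (IHF1 HL (fun r h => H r (or_introl h))).
    specialize (IHF2 HL (fun r h => H r (or_intror h))). nia.
  - specialize (IHF HL H). nia.
  - specialize (IHF HL H). nia.
Qed.

Definition decb (P : Prop) : bool :=
  if excluded_middle_informative P then true else false.

Lemma decb_spec P : decb P = true <-> P.
Proof. unfold decb; destruct (excluded_middle_informative P); split; congruence || tauto. Qed.

Section S.
Variable D : definition.
Definition U := nodup Nat.eq_dec (flat_map (fun c => fpreds (cl_body c)) D).
Definition depset q := filter (fun r => decb (r <> q /\ depends D q r)) U.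
Definition h q := length (depset q).

Lemma depends_in q r : depends D q r -> In r U.
Proof.
  intros H. induction H as [x y Hs| x y z _ _ _ IH2]; auto.
  destruct Hs as [c [Hc [_ Ho]]].
  unfold U. apply nodup_In. apply in_flat_map. exists c. split; auto.
  apply fpreds_spec; auto.
Qed.

Lemma h_lt q r : (forall p q, p <> q -> depends D q p -> ~ depends D p q) ->
  r <> q -> depends D q r -> h r < h q.
Proof.
  intros NM Hrq Hd. unfold h.
  assert (Hin : In r (depset q)).
  { unfold depset. apply filter_In. split. eapply depends_in; eauto.
    apply decb_spec. auto. }
  assert (HN : NoDup (depset r)).
  { unfold depset. apply NoDup_filter. apply NoDup_nodup. }
  assert (Hincl : incl (depset r) (remove Nat.eq_dec r (depset q))).
  { intros x Hx. unfold depset in Hx. apply filter_In in Hx as [HU Hx].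
    apply decb_spec in Hx as [Hxr Hdx].
    apply in_in_remove; auto. unfold depset. apply filter_In. split; auto.
    apply decb_spec. split.
    - intros ->. exact (NM r q Hrq Hd Hdx).
    - eapply t_trans; eauto. }
  pose proof (NoDup_incl_length HN Hincl).
  pose proof (remove_length_lt Nat.eq_dec (depset q) r Hin). eapply Nat.le_lt_trans; eassumption.
Qed.
End S.

Theorem mainTheorem3 (D : definition) :
  well_formed_definition D ->
  exists lvl : pred_const -> nat,
    (forall p, occurs_in_definition D p -> 0 < lvl p) /\
    (forall c, In c D ->
       forall (xs : list tm) (i : nat),
         head_size lvl (cl_head c) xs > fsize lvl (subst_pred (cl_head c) i (cl_body c))).
Proof.
  intros [_ [_ NM]].
  set (B := S (list_max (map (fun c => nodes (cl_body c)) D))).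
  exists (fun q => B ^ (h D q + 1)).
  split.
  - intros p _. apply Nat.neq_0_lt_0. apply Nat.pow_nonzero. unfold B; lia.
  - intros c Hc xs i. unfold head_size; simpl.
    assert (Hn : nodes (cl_body c) < B).
    { unfold B. apply le_n_S.
      pose proof (proj1 (list_max_le (map (fun c => nodes (cl_body c)) D) _) (le_n _)) as HF.
      rewrite Forall_forall in HF. apply HF. apply in_map_iff. eauto. }
    assert (HL : 1 <= B ^ h D (cl_head c)).
    { pose proof (Nat.pow_nonzero B (h D (cl_head c))). unfold B in *; lia. }
    pose proof (size_bound (fun q => B ^ (h D q + 1)) (B ^ h D (cl_head c))
                  (subst_pred (cl_head c) i (cl_body c)) HL) as Hs.
    rewrite subst_nodes in Hs.
    assert (Hle : fsize (fun q => B ^ (h D q + 1)) (subst_pred (cl_head c) i (cl_body c))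
                  <= nodes (cl_body c) * B ^ h D (cl_head c)).
    { apply Hs. intros r Hr. apply subst_occ in Hr as [Hne Ho].
      apply Nat.pow_le_mono_r. unfold B; lia.
      assert (h D r < h D (cl_head c)).
      { apply h_lt; auto. apply t_step. exists c; auto. }
      lia. }
    rewrite Nat.pow_add_r, Nat.pow_1_r. nia.
Qed.
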